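(* Let $K=\{x\in[0,1]^n: g_\ell(x)\ge 0,\ \ell=1,\dots,m\}$ with affine $g_\ell$, $V=[n]$, $t>1$, $y\in\mathrm{La}^t(K)$, $k<t$ a positive integer and $S\subseteq V$ such that $y_I=0$ for every $I\in\mathcal P_{2t}(V)$ with $|I\cap S|\ge k$. Let $y'$ be the extension of $y$ (so $y'_I=y_I$ if $|I|\le 2t$ and $y'_I=0$ otherwise), and for $X\subseteq S$ let $z^X_I=\sum_{J:\,X\subseteq J\subseteq S}(-1)^{|J\setminus X|}y'_{I\cup J}$. Then for every $X\subseteq S$: (1) $z^X_\emptyset\ge 0$; (2) if $z^X_\emptyset=0$ then $z^X_I=0$ for every $I\subseteq V$ with $|I|\le 2t-2k$.
   Context: Notation: $\mathcal P_t(U)$ is the set of subsets of $U$ of size at most $t$. For a collection $\mathcal T$ of subsets and a vector $y$ indexed by subsets, $M_{\mathcal T}(y)$ is the symmetric matrix indexed by $\mathcal T$ with $(I,J)$-entry $y_{I\cup J}$. For an affine $g(x)=b+\sum_{j}a_jx_j$, $(g*y)_I=b\,y_I+\sum_j a_j y_{I\cup\{j\}}$. The $t$-th Lasserre lifted polytope $\mathrm{La}^t(K)$ of $K=\{x\in[0,1]^n:g_\ell(x)\ge0,\ \ell=1,\dots,m\}$ is the set of $y\in[0,1]^{\mathcal P_{2t}(V)}$ with $y_\emptyset=1$, $M_{\mathcal P_t(V)}(y)\succeq0$, and $M_{\mathcal P_{t-1}(V)}(g_\ell*y)\succeq0$ for all $\ell$. *)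

(* Defs.v *)
From HB Require Import structures.
From mathcomp Require Import all_boot all_order all_algebra.
Set Implicit Arguments. Unset Strict Implicit. Unset Printing Implicit Defensive.
Import Order.TTheory GRing.Theory Num.Theory.
Local Open Scope ring_scope.

(* Ground set V = [n] is 'I_n; subsets are {set 'I_n}; vectors indexed by
   subsets are functions {set 'I_n} -> R (only values on the relevant
   index family matter). *)

Definition Pt (n t : nat) : {set {set 'I_n}} := [set I : {set 'I_n} | #|I| <= t]%N.

Definition psd {R : realFieldType} {n : nat} (T : {set {set 'I_n}})
  (M : {set 'I_n} -> {set 'I_n} -> R) : Prop :=
  forall v : {set 'I_n} -> R,
    0 <= \sum_(I in T) \sum_(J in T) v I * M I J * v J.

Definition momMx {R : realFieldType} {n : nat} (y : {set 'I_n} -> R) :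
  {set 'I_n} -> {set 'I_n} -> R := fun I J => y (I :|: J).

Definition gstar {R : realFieldType} {n : nat} (b : R) (a : 'I_n -> R)
  (y : {set 'I_n} -> R) : {set 'I_n} -> R :=
  fun I => b * y I + \sum_(j : 'I_n) a j * y (I :|: [set j]).

(* y in La^t(K), K = {x in [0,1]^n : b l + sum_j a l j x_j >= 0, l < m} *)
Definition inLasserre {R : realFieldType} {n m : nat} (t : nat)
  (b : 'I_m -> R) (a : 'I_m -> 'I_n -> R) (y : {set 'I_n} -> R) : Prop :=
  [/\ forall I, I \in Pt n (2 * t) -> 0 <= y I <= 1,
      y set0 = 1,
      psd (Pt n t) (momMx y)
    & forall l : 'I_m, psd (Pt n (t - 1)) (momMx (gstar (b l) (a l) y))].

Definition yext {R : realFieldType} {n : nat} (t : nat) (y : {set 'I_n} -> R) :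
  {set 'I_n} -> R := fun I => if (#|I| <= 2 * t)%N then y I else 0.

Definition zvec {R : realFieldType} {n : nat} (t : nat) (y : {set 'I_n} -> R)
  (S X : {set 'I_n}) : {set 'I_n} -> R :=
  fun I => \sum_(J in powerset S | X \subset J)
             (-1) ^+ #|J :\: X| * yext t y (I :|: J).

(* Main.v *)
Require Import Defs.
From HB Require Import structures.
From mathcomp Require Import all_boot all_order all_algebra.
From Stdlib Require Import Lia.
Import Order.TTheory GRing.Theory Num.Theory.
Local Open Scope ring_scope.

Section QF.
Variables (R : realFieldType) (n : nat).
Local Notation sT := {set 'I_n}.

Definition qf (T : {set sT}) (M : sT -> sT -> R) (u w : sT -> R) : R :=
  \sum_(A in T) \sum_(B in T) u A * M A B * w B.

Lemma qf_linl T M al be u w z :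
  qf T M (fun A => al * u A + be * w A) z = al * qf T M u z + be * qf T M w z.
Proof.
rewrite /qf !mulr_sumr -big_split; apply: eq_bigr => A _.
rewrite !mulr_sumr -big_split; apply: eq_bigr => B _.
by rewrite !mulrDl !mulrA.
Qed.

Lemma qf_linr T M al be u w z :
  qf T M z (fun A => al * u A + be * w A) = al * qf T M z u + be * qf T M z w.
Proof.
rewrite /qf !mulr_sumr -big_split; apply: eq_bigr => A _.
rewrite !mulr_sumr -big_split; apply: eq_bigr => B _.
by rewrite mulrDr [_ * (al * _)]mulrCA [_ * (be * _)]mulrCA.

Qed.

Lemma qf_sym T M : (forall A B, M A B = M B A) -> forall u w, qf T M u w = qf T M w u.
Proof.
move=> sM u w; rewrite /qf exchange_big; apply: eq_bigr => A _; apply: eq_bigr => B _.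
by rewrite sM mulrC [u B * _]mulrC mulrA.
Qed.

Lemma psd_zero T M : (forall A B, M A B = M B A) -> psd T M ->
  forall u w, qf T M u u = 0 -> qf T M u w = 0.
Proof.
move=> sM H u w H0.
have Hwu : qf T M w u = qf T M u w by rewrite qf_sym.
set a := qf T M u w in Hwu *; set b := qf T M w w.
apply/eqP; apply: contraT => ha.
have a2 : a + a != 0 by rewrite -mulr2n mulrn_eq0.
set mu := - (b + 1) / (a + a).
have := H (fun A => mu * u A + 1 * w A).
rewrite -/(qf T M _ _) qf_linl !qf_linr H0 Hwu -/b -/a.
rewrite mulr0 add0r !mul1r addrA -mulrDr /mu divfK //.
by rewrite opprD addrAC addNr add0r oppr_ge0 ler10.
Qed.

End QF.
Arguments qf {R n}.
Arguments psd_zero {R n T M}.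

Section Comb.
Variables (R : realFieldType) (n : nat).
Local Notation sT := {set 'I_n}.

Definition sgn (X J : sT) : R := (-1) ^+ #|J :\: X|.

Definition fl (i : 'I_n) (A : sT) : sT := if i \in A then A :\ i else (i |: A)%SET.

Lemma fl_mem i (A : sT) z : z != i -> (z \in fl i A) = (z \in A).
Proof. by move=> hz; rewrite /fl; case: ifP; rewrite !inE (negbTE hz). Qed.

Lemma fl_i i (A : sT) : (i \in fl i A) = (i \notin A).
Proof. by rewrite /fl; case: ifP => h; rewrite !inE ?eqxx ?h. Qed.

Lemma fl_inv i : involutive (fl i).
Proof.
move=> A; apply/setP => z; case: (eqVneq z i) => [->|hz].
  by rewrite !fl_i negbK.
by rewrite !fl_mem.
Qed.

Lemma fl_subl i (A B : sT) : i \in B -> (fl i A \subset B) = (A \subset B).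
Proof.
move=> hi; apply/subsetP/subsetP => H z; case: (eqVneq z i) => [->//|hz];
  move: (H z); by rewrite fl_mem.
Qed.

Lemma fl_subr i (A B : sT) : i \notin B -> (B \subset fl i A) = (B \subset A).
Proof.
move=> hi; apply/subsetP/subsetP => H z hzB; have hz : z != i
  by apply: contraNneq hi => <-.
  by move: (H z hzB); rewrite fl_mem.
by rewrite fl_mem // H.
Qed.

Lemma sgn_fl (X : sT) i (A : sT) : i \notin X -> sgn X (fl i A) = - sgn X A.
Proof.
move=> hi; rewrite /sgn (cardsD1 i (A :\: X)) (cardsD1 i (fl i A :\: X)).
have -> : (fl i A :\: X) :\ i = (A :\: X) :\ i.
  apply/setP => z; rewrite !inE; case: (eqVneq z i) => //= hz.
  by rewrite fl_mem.
rewrite !inE fl_i (negbTE hi) /=.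
by case: (i \in A) => /=; rewrite ?add0n ?add1n exprS mulN1r ?opprK.
Qed.

Lemma inv_cancel (S X J : sT) (G : sT -> R) : J \subset S -> X \subset J -> J != X ->
  \sum_(J' in powerset S | X \subset J') sgn X J' * G (J :|: J') = 0.
Proof.
move=> hJS hXJ hJX.
have [i] : exists i, i \in J :\: X.
  apply/set0Pn; rewrite setD_eq0; apply: contra hJX => hJX'.
  by rewrite eqEsubset hJX' hXJ.
rewrite inE => /andP [iX iJ].
have iS : i \in S by apply: (subsetP hJS).
set s := \sum_(_ in _ | _) _.
have Hs : s = - s.
  rewrite {1}/s (reindex_inj (inv_inj (fl_inv i))) /= /s -sumrN.
  apply: eq_big => [J'|J' _].
    by rewrite !powersetE fl_subl // fl_subr.
  rewrite sgn_fl // mulNr; congr (- (_ * G _)).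
  apply/setP => z; rewrite !inE; case: (eqVneq z i) => [->|hz].
    by rewrite iJ.
  by rewrite fl_mem.
by move/eqP: Hs; rewrite -addr_eq0 -mulr2n mulrn_eq0 => /eqP.
Qed.

Lemma A_identity (S X : sT) (G : sT -> R) : X \subset S ->
  \sum_(J in powerset S | X \subset J) sgn X J *
     \sum_(J' in powerset S | X \subset J') sgn X J' * G (J :|: J')
  = \sum_(J' in powerset S | X \subset J') sgn X J' * G J'.
Proof.
move=> hXS; rewrite (bigD1 X) /=; last by rewrite powersetE hXS subxx.
rewrite [Z in _ + Z]big1 ?addr0.
  rewrite /sgn setDv cards0 expr0 mul1r.
  by apply: eq_bigr => J' /andP[_ hXJ']; rewrite (setUidPr hXJ').
move=> J /andP[/andP[hJS hXJ] hJX]; rewrite powersetE in hJS.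
by rewrite inv_cancel ?mulr0.
Qed.

End Comb.
Arguments sgn {R n}.
Arguments A_identity {R n S X}.

Lemma card_U {n : nat} (A B : {set 'I_n}) : (#|A :|: B| <= #|A| + #|B|)%N.
Proof. by rewrite -cardsUI leq_addr. Qed.

Lemma exists_sub {n : nat} (I : {set 'I_n}) s : (s <= #|I|)%N ->
  exists I1 : {set 'I_n}, I1 \subset I /\ #|I1| = s.
Proof.
elim: s => [_|s IH hs]; first by exists set0; rewrite sub0set cards0.
have [I1 [hsub hc]] := IH (ltnW hs).
have : (I :\: I1) != set0.
  by rewrite -card_gt0 cardsDS // hc subn_gt0.
case/set0Pn => x; rewrite inE => /andP[hx1 hx]; exists (x |: I1); split.
  by rewrite subUset sub1set hx hsub.
by rewrite cardsU1 hx1 hc add1n.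
Qed.

Section Main.
Variables (R : realFieldType) (n : nat) (t k : nat) (y : {set 'I_n} -> R) (S X : {set 'I_n}).
Local Notation sT := {set 'I_n}.
Hypotheses (hkt : (k < t)%N) (hXS : X \subset S)
  (Hy : forall I, I \in Pt n (2*t) -> (k <= #|I :&: S|)%N -> y I = 0).

Lemma vanish (I L : sT) : L \subset S -> (k <= #|L|)%N -> yext t y (I :|: L) = 0.
Proof.
move=> hLS hkL; rewrite /yext; case: ifP => // h.
apply: Hy; first by rewrite /Pt inE.
apply: leq_trans hkL _; apply: subset_leq_card; by rewrite subsetI subsetUr hLS.
Qed.

Definition cc (J : sT) : R := if (#|J| < k)%N then sgn X J else 0.
Definition vec (I1 A : sT) : R :=
  \sum_(J in powerset S | X \subset J) cc J * (A == I1 :|: J)%:R.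

Lemma push (T : {set sT}) (I1 : sT) (g : sT -> R) :
  (forall J : sT, J \subset S -> (#|J| < k)%N -> I1 :|: J \in T) ->
  \sum_(A in T) vec I1 A * g A = \sum_(J in powerset S | X \subset J) cc J * g (I1 :|: J).
Proof.
move=> HT; under eq_bigr do rewrite /vec mulr_suml.
rewrite exchange_big; apply: eq_bigr => J /andP[hJS _]; rewrite powersetE in hJS.
rewrite /cc; case: ifP => hk; last by rewrite mul0r big1 // => A _; rewrite !mul0r.
rewrite (bigD1 (I1 :|: J)) ?HT //= eqxx mulr1 [Z in _ + Z]big1 ?addr0 // => A /andP[_ hA].
by rewrite (negbTE hA) mulr0 mul0r.
Qed.

Lemma inPt (I1 J : sT) : (#|I1| <= t - k)%N -> (#|J| < k)%N -> I1 :|: J \in Pt n t.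
Proof.
move=> h1 h2; rewrite /Pt inE; apply: leq_trans (card_U _ _) _.
apply: leq_trans (leq_add h1 (ltnW h2)) _; by rewrite subnK // ltnW.
Qed.

Lemma qf_vec {I1 I2 : sT} : (#|I1| <= t - k)%N -> (#|I2| <= t - k)%N ->
  qf (Pt n t) (momMx y) (vec I1) (vec I2) = zvec t y S X (I1 :|: I2).
Proof.
move=> h1 h2.
transitivity (\sum_(A in Pt n t) vec I1 A *
   \sum_(J' in powerset S | X \subset J') cc J' * y (A :|: (I2 :|: J'))).
  apply: eq_bigr => A _.
  rewrite -(push (Pt n t) I2 (fun B => y (A :|: B))); last by move=> J _ hJ; apply: inPt.
  rewrite mulr_sumr; apply: eq_bigr => B _.
  by rewrite /momMx [vec I2 B * _]mulrC mulrA.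
transitivity (\sum_(J' in powerset S | X \subset J') cc J' *
   \sum_(J in powerset S | X \subset J) cc J * y ((I1 :|: J) :|: (I2 :|: J'))).
  under eq_bigr do rewrite mulr_sumr.
  rewrite exchange_big; apply: eq_bigr => J' _.
  have -> : \sum_(A in Pt n t) vec I1 A * (cc J' * y (A :|: (I2 :|: J'))) =
     cc J' * \sum_(A in Pt n t) vec I1 A * y (A :|: (I2 :|: J')).
    by rewrite mulr_sumr; apply: eq_bigr => A _; rewrite mulrCA.
  by rewrite (push (Pt n t) I1 (fun A => y (A :|: (I2 :|: J')))) // => J _ hJ; apply: inPt.
rewrite /zvec -(A_identity (fun L => yext t y ((I1 :|: I2) :|: L)) hXS).
apply: eq_bigr => J' /andP[hJ'S _]; rewrite powersetE in hJ'S.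
rewrite !mulr_sumr; apply: eq_bigr => J /andP[hJS _]; rewrite powersetE in hJS.
have hU : (J' :|: J) \subset S by rewrite subUset hJ'S hJS.
case: (boolP ((#|J| < k) && (#|J'| < k))%N) => [/andP[hJ hJ']|hn].
  rewrite /cc hJ hJ'.
  have -> : (I1 :|: I2) :|: (J' :|: J) = (I1 :|: J) :|: (I2 :|: J').
    apply/setP => z; rewrite !inE.
    by case: (z \in I1); case: (z \in I2); case: (z \in J); case: (z \in J').
  rewrite /yext ifT //; apply: leq_trans (card_U _ _) _.
  have := @inPt _ _ h1 hJ; have := @inPt _ _ h2 hJ'; rewrite /Pt !inE => a1 a2.
  by rewrite mul2n -addnn leq_add.
have hkU : (k <= #|J' :|: J|)%N.
  move: hn; rewrite negb_and -!leqNgt => /orP[h|h]; apply: leq_trans h _;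
    apply: subset_leq_card; [exact: subsetUr | exact: subsetUl].
rewrite (vanish _ _ hU hkU) !mulr0.
by move: hn; rewrite /cc negb_and => /orP[h|h]; rewrite (negbTE h) ?mul0r ?mulr0.
Qed.

Lemma final : psd (Pt n t) (momMx y) ->
  0 <= zvec t y S X set0 /\
  (zvec t y S X set0 = 0 ->
     forall I : sT, (#|I| <= 2 * t - 2 * k)%N -> zvec t y S X I = 0).
Proof.
move=> Hpsd.
have h0 : (#|@set0 'I_n| <= t - k)%N by rewrite cards0.
have E0 := qf_vec h0 h0; rewrite setU0 in E0.
split; first by rewrite -E0; exact: Hpsd.
move=> Z I hI.
have sym : forall A B, momMx y A B = momMx y B A by move=> A B; rewrite /momMx setUC.
have [I1 [hI1 cI1]] := exists_sub I _ (geq_minl #|I| (t - k)).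
set I2 := I :\: I1.
have h1 : (#|I1| <= t - k)%N by rewrite cI1 geq_minr.
have h2 : (#|I2| <= t - k)%N.
  rewrite /I2 cardsDS // cI1; move: hI; rewrite /minn; case: ifP => _ /ssrnat.leP hI; apply/ssrnat.leP;
  rewrite -?minusE -?multE in hI *; lia.
have HI : I1 :|: I2 = I.
  apply/setP => z; rewrite !inE; case: (boolP (z \in I1)) => hz //=.
  by rewrite (subsetP hI1 _ hz).
have Z0 : qf (Pt n t) (momMx y) (vec set0) (vec set0) = 0 by rewrite E0.
have Z1 := psd_zero sym Hpsd (vec set0) (vec I1) Z0.
rewrite qf_vec // set0U in Z1.
have Z2 : qf (Pt n t) (momMx y) (vec I1) (vec I1) = 0 by rewrite qf_vec // setUid.
have := psd_zero sym Hpsd (vec I1) (vec I2) Z2.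
by rewrite qf_vec // HI.
Qed.

End Main.

Theorem mainTheorem8 (R : realFieldType) (n m : nat)
  (b : 'I_m -> R) (a : 'I_m -> 'I_n -> R) (t k : nat)
  (y : {set 'I_n} -> R) (S : {set 'I_n}) :
  (1 < t)%N -> (0 < k)%N -> (k < t)%N ->
  inLasserre t b a y ->
  (forall I : {set 'I_n}, I \in Pt n (2 * t) -> (k <= #|I :&: S|)%N -> y I = 0) ->
  forall X : {set 'I_n}, X \subset S ->
    0 <= zvec t y S X set0 /\
    (zvec t y S X set0 = 0 ->
       forall I : {set 'I_n}, (#|I| <= 2 * t - 2 * k)%N -> zvec t y S X I = 0).
Proof.
move=> _ _ hkt [_ _ Hpsd _] Hy X hXS.
exact: (@final R n t k y S X hkt hXS Hy Hpsd).
Qed.
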